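(* Let $T\in(0,\infty]$ and let $K(T),M(T)\in\Im_T$. If $M(T)\approx K(T)$, then for every Banach function space $\widetilde{X}(0,T)$, $$K(T)\mapsto\widetilde{X}(0,T)\iff M(T)\mapsto\widetilde{X}(0,T).$$
   Context: $\Im_T$ is the collection of cones $K(T)$ of nonnegative measurable functions on $(0,T)$ equipped with functionals $\rho_{K(T)}:K(T)\to[0,\infty)$ such that $h\in K(T),\alpha\ge0$ implies $\alpha h\in K(T)$ and $\rho_{K(T)}(\alpha h)=\alpha\rho_{K(T)}(h)$, and $\rho_{K(T)}(h)=0$ implies $h=0$ a.e. on $(0,T)$. Covering: $M(T)\prec K(T)$ if there exist $C_0=C_0(T)>0$ and $C_1=C_1(T)\in[0,\infty)$ with $C_1(\infty)=0$ such that for each $h_1\in M(T)$ there is $h_2\in K(T)$ with $\rho_{K(T)}(h_2)\le C_0\rho_{M(T)}(h_1)$ and $h_1(t)\le h_2(t)+C_1\rho_{M(T)}(h_1)$ for $t\in(0,T)$. $M(T)\approx K(T)$ means $M(T)\prec K(T)$ and $K(T)\prec M(T)$. Embedding: $M(T)\mapsto\widetilde{X}(0,T)$ means $M(T)\subset\widetilde{X}(0,T)$ and there is a constant $C>0$ with $\|h\|_{\widetilde{X}(0,T)}\le C\rho_{M(T)}(h)$ for all $h\in M(T)$. *)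

(* Defs.v *)
From HB Require Import structures.
From mathcomp Require Import all_boot all_order all_algebra.
From mathcomp Require Import all_classical all_reals all_analysis measurable_realfun.
Set Implicit Arguments. Unset Strict Implicit. Unset Printing Implicit Defensive.
Import Order.TTheory GRing.Theory Num.Theory.
Import numFieldNormedType.Exports.
Local Open Scope classical_set_scope.
Local Open Scope ring_scope.

Section Defs.
Variable R : realType.
Local Notation mu := (@lebesgue_measure R).

(* The open interval (0,T), T in (0, +oo]. Functions "on (0,T)" are modelled as
   extended-real valued functions on R, of which only the values on (0,T) matter. *)
Definition itv0T (T : \bar R) : set R := [set x | 0 < x /\ (x%:E < T)%E].

Definition nnmeas (T : \bar R) (f : R -> \bar R) : Prop :=
  measurable_fun (itv0T T) f /\ (forall x, itv0T T x -> (0 <= f x)%E).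

Definition in_ImT (T : \bar R) (K : set (R -> \bar R)) (rho : (R -> \bar R) -> R)
  : Prop :=
  [/\ (forall h, K h -> nnmeas T h),
      (forall h, K h -> 0 <= rho h),
      (forall h (a : R), K h -> 0 <= a ->
          K (fun x => (a%:E * h x)%E) /\ rho (fun x => (a%:E * h x)%E) = a * rho h)
    & (forall h, K h -> rho h = 0 ->
          mu.-negligible [set x | itv0T T x /\ h x <> 0%E])].

Definition covered (T : \bar R)
  (M : set (R -> \bar R)) (rhoM : (R -> \bar R) -> R)
  (K : set (R -> \bar R)) (rhoK : (R -> \bar R) -> R) : Prop :=
  exists C0 C1 : R, [/\ 0 < C0, 0 <= C1, (T = +oo%E -> C1 = 0) &
    forall h1, M h1 -> exists h2, [/\ K h2, rhoK h2 <= C0 * rhoM h1 &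
      forall x, itv0T T x -> (h1 x <= h2 x + (C1 * rhoM h1)%:E)%E]].

Definition equiv_cone (T : \bar R)
  (M : set (R -> \bar R)) (rhoM : (R -> \bar R) -> R)
  (K : set (R -> \bar R)) (rhoK : (R -> \bar R) -> R) : Prop :=
  covered T M rhoM K rhoK /\ covered T K rhoK M rhoM.

(* Banach function norm on (0,T) (Bennett--Sharpley axioms (P1)-(P5)),
   acting on nonnegative measurable functions on (0,T). *)
Definition BF_norm (T : \bar R) (rho : (R -> \bar R) -> \bar R) : Prop :=
  let D := itv0T T in
  let nn f := measurable_fun D f /\ (forall x, (0 <= f x)%E) in
  (forall f, nn f -> (0 <= rho f)%E) /\
  (forall f, nn f -> (rho f = 0%E <-> mu.-negligible [set x | D x /\ f x <> 0%E])) /\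
  (forall f (a : R), nn f -> 0 <= a -> rho (fun x => (a%:E * f x)%E) = (a%:E * rho f)%E) /\
  (forall f g, nn f -> nn g -> (rho (fun x => f x + g x) <= rho f + rho g)%E) /\
  (forall f g, nn f -> nn g ->
     mu.-negligible [set x | D x /\ ~ (g x <= f x)%E] -> (rho g <= rho f)%E) /\
  (forall (fs : nat -> R -> \bar R) f, (forall n, nn (fs n)) -> nn f ->
     mu.-negligible [set x | D x /\
        ~ ((forall n, (fs n x <= fs n.+1 x)%E) /\ (fun n => fs n x) @ \oo --> f x)] ->
     (fun n => rho (fs n)) @ \oo --> rho f) /\
  (forall E, measurable E -> E `<=` D -> (mu E < +oo)%E ->
     (rho (fun x => (\1_E x)%:E) < +oo)%E) /\
  (forall E, measurable E -> E `<=` D -> (mu E < +oo)%E ->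
     exists CE : R, 0 < CE /\
       forall f, nn f -> (\int[mu]_(x in E) f x <= CE%:E * rho f)%E).

(* The embedding M(T) \mapsto \tilde X(0,T), where \tilde X(0,T) is the Banach
   function space {f measurable on (0,T) : rhoX |f| < oo} with norm rhoX |f|. *)
Definition embeds (T : \bar R) (M : set (R -> \bar R)) (rhoM : (R -> \bar R) -> R)
  (rhoX : (R -> \bar R) -> \bar R) : Prop :=
  (forall h, M h -> measurable_fun (itv0T T) h /\ (rhoX (fun x => `|h x|%E) < +oo)%E) /\
  exists C : R, 0 < C /\
    forall h, M h -> (rhoX (fun x => `|h x|%E) <= (C * rhoM h)%:E)%E.

End Defs.

(* Main.v *)
Require Import Defs.
From HB Require Import structures.
From mathcomp Require Import all_boot all_order all_algebra.
From mathcomp Require Import all_classical all_reals all_analysis measurable_realfun.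
From mathcomp Require Import ring lra.
Import Order.TTheory GRing.Theory Num.Theory.
Local Open Scope ring_scope.

Section Aux.
Local Open Scope classical_set_scope.

Lemma itv0T_fin (R : realType) (t : R) : itv0T t%:E = `]0, t[%classic.
Proof.
apply/seteqP; split => x /=.
  by case=> x0 xt; rewrite in_itv /= x0 -lte_fin.
by rewrite in_itv /= => /andP[x0 xt]; split => //; rewrite lte_fin.
Qed.


Lemma rho_zero (R : realType) (T : \bar R) (rhoX : (R -> \bar R) -> \bar R) :
  BF_norm T rhoX -> rhoX (fun _ => 0%:E) = 0%E.
Proof.
move=> [P1 [P1z [Phom _]]].
have nn0 : measurable_fun (itv0T T) (fun _ : R => 0%:E : \bar R) /\ (forall x, (0 <= (fun _ : R => 0%:E : \bar R) x)%E).
  by split => //; exact: measurable_cst.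
have := Phom _ 0 nn0 (lexx 0).
have -> : (fun x : R => (0%:E * (fun _ : R => 0%:E : \bar R) x)%E) = (fun _ => 0%:E).
  by apply: funext => x; rewrite mul0e.
by rewrite mul0e.
Qed.

Lemma const_bound (R : realType) (T : \bar R) (rhoX : (R -> \bar R) -> \bar R)
  (C1 : R) : (0 < T)%E -> 0 <= C1 -> (T = +oo%E -> C1 = 0) -> BF_norm T rhoX ->
  exists r : R, 0 <= r /\ forall a : R, 0 <= a ->
    (rhoX (fun _ => (C1 * a)%:E) <= (C1 * a * r)%:E)%E.
Proof.
case: T => [t| |] T0 C1p C1oo BF; last by move: T0; rewrite ltNge leNye.
2: {
  exists 0; split => // a a0; rewrite C1oo // mul0r mul0r (rho_zero _ _ _ BF).
by [].
}
have [P1 [P1z [Phom [Padd [Plat [_ [P4 _]]]]]]] := BF.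
set E := itv0T t%:E.
have mE : measurable E by rewrite /E itv0T_fin; exact: measurable_itv.
have fE : (lebesgue_measure E < +oo)%E.
  by rewrite /E itv0T_fin lebesgue_measure_itv /=; case: ifP => _; rewrite ?ltry.
have nnI : measurable_fun E (fun x => (\1_E x)%:E : \bar R) /\ (forall x, (0 <= (fun x => (\1_E x)%:E : \bar R) x)%E).
  split; last by move=> x; rewrite lee_fin.
  by apply/measurable_EFinP; exact: measurable_indic.
have := P4 E mE (fun x Ex => Ex) fE.
have := P1 _ nnI.
set q := rhoX _ => q0 qoo.
exists (fine q); split; first exact: fine_ge0.
move=> a a0.
have ca : 0 <= C1 * a by exact: mulr_ge0.
have nnc : measurable_fun E (fun _ => (C1 * a)%:E : \bar R) /\ (forall x, (0 <= (fun _ => (C1 * a)%:E : \bar R) x)%E).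
  by split; [exact: measurable_cst | move=> x; rewrite lee_fin].
apply: (@le_trans _ _ (rhoX (fun x => ((C1 * a)%:E * (fun x => (\1_E x)%:E : \bar R) x)%E))).
  apply: Plat => //.
    split.
      apply: emeasurable_funM; first exact: measurable_cst.
      exact: (proj1 nnI).
    by move=> x; apply: mule_ge0; rewrite lee_fin // ?indic_ge0.
  apply: (negligibleS _ (negligible_set0 _)) => x [Ex /= H]; apply: H.
  by rewrite indicE mem_set // mule1.
rewrite (Phom _ _ nnI ca) -/q.
have qE : q = (fine q)%:E by rewrite fineK // ge0_fin_numE.
by rewrite qE -EFinM.
Qed.

Lemma embed_transfer (R : realType) (T : \bar R)
  (K : set (R -> \bar R)) (rhoK : (R -> \bar R) -> R)
  (M : set (R -> \bar R)) (rhoM : (R -> \bar R) -> R)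
  (rhoX : (R -> \bar R) -> \bar R) :
  (0 < T)%E -> in_ImT T M rhoM -> covered T M rhoM K rhoK -> BF_norm T rhoX ->
  embeds T K rhoK rhoX -> embeds T M rhoM rhoX.
Proof.
move=> T0 [Mnn Mpos _ _] [C0 [C1 [C0p C1p C1oo cov]]] BF [Kemb [CK [CKp KC]]].
have [r [r0 hr]] := @const_bound _ _ _ _ T0 C1p C1oo BF.
have [P1 [P1z [Phom [Padd [Plat _]]]]] := BF.
have main : forall h1, M h1 ->
    (rhoX (fun x => `|h1 x|%E) <= ((CK * C0 + C1 * r) * rhoM h1)%:E)%E.
  move=> h1 Mh1.
  have [h2 [Kh2 rh2 hle]] := cov h1 Mh1.
  have [mh1 h1p] := Mnn h1 Mh1.
  have mh2 := proj1 (Kemb h2 Kh2).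
  have rM0 := Mpos h1 Mh1.
  have c0 : 0 <= C1 * rhoM h1 by exact: mulr_ge0.
  have nnabs : forall h : R -> \bar R, measurable_fun (itv0T T) h ->
      measurable_fun (itv0T T) (fun x => `|h x|%E) /\ (forall x, (0 <= (fun x => `|h x|%E) x)%E).
    move=> h mh; split => //.
    exact: (measurableT_comp (@abse_measurable R setT) mh).
  have nnc : measurable_fun (itv0T T) (fun _ => (C1 * rhoM h1)%:E : \bar R) /\ (forall x, (0 <= (fun _ => (C1 * rhoM h1)%:E : \bar R) x)%E).
    by split; [exact: measurable_cst | move=> x; rewrite lee_fin].
  have nns : measurable_fun (itv0T T) (fun x => (`|h2 x| + (C1 * rhoM h1)%:E)%E) /\
      (forall x, (0 <= (fun x => (`|h2 x| + (C1 * rhoM h1)%:E)%E) x)%E).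
    split.
      apply: emeasurable_funD; first exact: (proj1 (nnabs _ mh2)).
      exact: measurable_cst.
    by move=> x; apply: adde_ge0; rewrite ?lee_fin.
  apply: (le_trans (Plat _ _ nns (nnabs _ mh1) _)).
    apply: (negligibleS _ (negligible_set0 _)) => x [Dx /= H]; apply: H.
    rewrite gee0_abs; last exact: h1p.
    apply: (le_trans (hle x Dx)); rewrite leeD2r //; exact: lee_abs.
  apply: le_trans.
    apply: (Padd (fun x => `|h2 x|%E) (fun _ => (C1 * rhoM h1)%:E)).
      exact: nnabs.
    split; [exact: measurable_cst | by move=> _; rewrite lee_fin].
  have := leeD (KC h2 Kh2) (hr _ rM0).
  move/le_trans; apply.
  rewrite -EFinD lee_fin.
  have H := ler_wpM2l (ltW CKp) rh2.
  rewrite mulrA in H.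
  have -> : (CK * C0 + C1 * r) * rhoM h1 = CK * C0 * rhoM h1 + C1 * r * rhoM h1 by ring.
  have -> : C1 * rhoM h1 * r = C1 * r * rhoM h1 by ring.
  by rewrite lerD2r.
split.
  move=> h1 Mh1; split; first exact: (proj1 (Mnn h1 Mh1)).
  exact: (le_lt_trans (main h1 Mh1) (ltry _)).
exists (CK * C0 + C1 * r); split => //.
have := mulr_gt0 CKp C0p; have := mulr_ge0 C1p r0.
move=> a b; exact: ltr_wpDr.
Qed.
End Aux.
Theorem corollary4p1 (R : realType) (T : \bar R)
  (K : set (R -> \bar R)) (rhoK : (R -> \bar R) -> R)
  (M : set (R -> \bar R)) (rhoM : (R -> \bar R) -> R) :
  (0 < T)%E ->
  in_ImT T K rhoK -> in_ImT T M rhoM ->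
  equiv_cone T M rhoM K rhoK ->
  forall rhoX : (R -> \bar R) -> \bar R, BF_norm T rhoX ->
    (embeds T K rhoK rhoX <-> embeds T M rhoM rhoX).
Proof.
move=> T0 IK IM [cMK cKM] rhoX BF; split.
  exact: (@embed_transfer _ _ _ _ _ _ _ T0 IM cMK BF).
exact: (@embed_transfer _ _ _ _ _ _ _ T0 IK cKM BF).
Qed.
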